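(* Let $\phi(x)=\psi_0(\psi_1(x),\dots,\psi_n(x))$ where $\psi_0(y_1,\dots,y_n)$ is an IPC formula in which each $y_i$ is negative, and each $\psi_i$ ($1\le i\le n$) is an IPC formula in which $x$ is negative (all formulas may contain further parameter variables). Let $H$ be a Heyting algebra and $v$ a valuation of the parameters in $H$; write $\psi_j$ also for the induced functions. Then the monotone map $G:H^n\to H^n$, $G(\vec y)=(\psi_1(\psi_0(\vec y)),\dots,\psi_n(\psi_0(\vec y)))$, has a greatest fixed point $(\nu_1,\dots,\nu_n)$ (coordinatewise order), the map $F(h)=[\![\phi]\!]_{(v,h/x)}$ has a least fixed point, and $\mu.F=\psi_0(\nu_1,\dots,\nu_n)$.
   Context: An occurrence of a variable is negative in a formula if the path in the syntax tree from the root to it passes through an odd number of nodes labelled by an implication $\chi_1\to\chi_2$ whose successor on the path is $\chi_1$; a variable is negative in a formula if all its occurrences are negative. *)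

(* Defs.v *)
From mathcomp Require Import all_boot.
Set Implicit Arguments. Unset Strict Implicit. Unset Printing Implicit Defensive.

Record heyting := Heyting {
  hcar :> Type;
  hle : hcar -> hcar -> Prop;
  hmeet : hcar -> hcar -> hcar;
  hjoin : hcar -> hcar -> hcar;
  himp : hcar -> hcar -> hcar;
  htop : hcar;
  hbot : hcar;
  hle_refl : forall a, hle a a;
  hle_trans : forall a b c, hle a b -> hle b c -> hle a c;
  hle_antisym : forall a b, hle a b -> hle b a -> a = b;
  hmeet_l : forall a b, hle (hmeet a b) a;
  hmeet_r : forall a b, hle (hmeet a b) b;
  hmeet_glb : forall a b c, hle c a -> hle c b -> hle c (hmeet a b);
  hjoin_l : forall a b, hle a (hjoin a b);
  hjoin_r : forall a b, hle b (hjoin a b);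
  hjoin_lub : forall a b c, hle a c -> hle b c -> hle (hjoin a b) c;
  hbot_least : forall a, hle hbot a;
  htop_greatest : forall a, hle a htop;
  himp_adj : forall a b c, hle c (himp a b) <-> hle (hmeet c a) b
}.

Inductive form (A : Type) : Type :=
| FVar of A
| FBot
| FTop
| FAnd of form A & form A
| FOr of form A & form A
| FImp of form A & form A.
Arguments FBot {A}. Arguments FTop {A}.

Fixpoint fsubst (A B : Type) (s : A -> form B) (f : form A) : form B :=
  match f with
  | FVar a => s a
  | FBot => FBot
  | FTop => FTop
  | FAnd f g => FAnd (fsubst s f) (fsubst s g)
  | FOr f g => FOr (fsubst s f) (fsubst s g)
  | FImp f g => FImp (fsubst s f) (fsubst s g)
  end.

Fixpoint feval (H : heyting) (A : Type) (e : A -> H) (f : form A) : H :=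
  match f with
  | FVar a => e a
  | FBot => hbot H
  | FTop => htop H
  | FAnd f g => hmeet (feval e f) (feval e g)
  | FOr f g => hjoin (feval e f) (feval e g)
  | FImp f g => himp (feval e f) (feval e g)
  end.

(* all_odd isx par f : every occurrence of an atom satisfying isx in f is
   reached by a path with an odd number of "antecedent" steps through
   implications, given that the path so far has parity par (true = odd). *)
Fixpoint all_odd (A : Type) (isx : A -> Prop) (par : bool) (f : form A) : Prop :=
  match f with
  | FVar a => isx a -> par = true
  | FBot | FTop => True
  | FAnd f g | FOr f g => all_odd isx par f /\ all_odd isx par g
  | FImp f g => all_odd isx (~~ par) f /\ all_odd isx par g
  end.

Definition negative_in (A : Type) (isx : A -> Prop) (f : form A) : Prop :=
  all_odd isx false f.

Definition is_lfp (H : heyting) (F : H -> H) (m : H) : Prop :=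
  F m = m /\ forall z, F z = z -> hle m z.

Definition is_gfp_vec (H : heyting) (n : nat) (G : ('I_n -> H) -> ('I_n -> H))
  (nu : 'I_n -> H) : Prop :=
  (forall i, G nu i = nu i) /\
  forall z, (forall i, G z i = z i) -> forall i, hle (z i) (nu i).

(* Main.v *)
Require Import Defs.

From mathcomp Require Import all_boot.
From Stdlib Require Import FunctionalExtensionality.
Set Implicit Arguments. Unset Strict Implicit.

Section HL.
Variable H : heyting.
Local Notation le := (@hle H).
Local Notation mt := (@hmeet H).

Lemma le_tr a b c : le a b -> le b c -> le a c.
Proof. exact: hle_trans. Qed.
Lemma mt_mono a a' b b' : le a a' -> le b b' -> le (mt a b) (mt a' b').
Proof.
move=> h1 h2; apply: hmeet_glb.
- exact: le_tr (hmeet_l _ _) h1.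
- exact: le_tr (hmeet_r _ _) h2.
Qed.
Lemma mt_comm a b : le (mt a b) (mt b a).
Proof. apply: hmeet_glb; [exact: hmeet_r | exact: hmeet_l]. Qed.
Lemma mp a b : le (mt (himp a b) a) b.
Proof. by apply/himp_adj; apply: hle_refl. Qed.
Lemma top_mt x : le x (mt (htop H) x).
Proof. apply: hmeet_glb; [exact: htop_greatest | exact: hle_refl]. Qed.
Lemma mt_self x : le x (mt x x).
Proof. apply: hmeet_glb; exact: hle_refl. Qed.
End HL.

Lemma feval_ext (H : heyting) (A : Type) (e e' : A -> H) (f : form A) :
  (forall a, e a = e' a) -> feval e f = feval e' f.
Proof. by move=> he; elim: f => //= [f IHf g IHg|f IHf g IHg|f IHf g IHg]; rewrite IHf IHg. Qed.

Lemma feval_subst (H : heyting) (A B : Type) (e : B -> H) (s : A -> form B) (f : form A) :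
  feval e (fsubst s f) = feval (fun a => feval e (s a)) f.
Proof. by elim: f => //= [f IHf g IHg|f IHf g IHg|f IHf g IHg]; rewrite IHf IHg. Qed.

Lemma IM (H : heyting) (A : Type) (f : form A) : forall (par : bool) (c : H) (e e' : A -> H),
  (forall a, hle (hmeet c (e a)) (e' a)) ->
  (forall a, hle (hmeet c (e' a)) (e a) \/ all_odd (fun b => b = a) par f) ->
  if par then hle (hmeet c (feval e f)) (feval e' f)
  else hle (hmeet c (feval e' f)) (feval e f).
Proof.
elim: f => [a|||f IHf g IHg|f IHf g IHg|f IHf g IHg] par c e e' h1 h2 /=.
- case: par h2 => h2 //. by case: (h2 a) => //= /(_ erefl).
- case: par h2 => _; exact: hmeet_r.
- case: par h2 => _; exact: htop_greatest.
- have h2f : forall a, hle (hmeet c (e' a)) (e a) \/ all_odd (fun b => b = a) par f.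
    by move=> a; case: (h2 a) => [?|[? ?]]; [left|right].
  have h2g : forall a, hle (hmeet c (e' a)) (e a) \/ all_odd (fun b => b = a) par g.
    by move=> a; case: (h2 a) => [?|[? ?]]; [left|right].
  move: (IHf par c e e' h1 h2f) (IHg par c e e' h1 h2g).
  clear h2 h2f h2g; case: par => Hf Hg; apply: hmeet_glb.
  + apply: hle_trans Hf; apply: mt_mono; [exact: hle_refl| exact: hmeet_l].
  + apply: hle_trans Hg; apply: mt_mono; [exact: hle_refl| exact: hmeet_r].
  + apply: hle_trans Hf; apply: mt_mono; [exact: hle_refl| exact: hmeet_l].
  + apply: hle_trans Hg; apply: mt_mono; [exact: hle_refl| exact: hmeet_r].
- have h2f : forall a, hle (hmeet c (e' a)) (e a) \/ all_odd (fun b => b = a) par f.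
    by move=> a; case: (h2 a) => [?|[? ?]]; [left|right].
  have h2g : forall a, hle (hmeet c (e' a)) (e a) \/ all_odd (fun b => b = a) par g.
    by move=> a; case: (h2 a) => [?|[? ?]]; [left|right].
  move: (IHf par c e e' h1 h2f) (IHg par c e e' h1 h2g).
  clear h2 h2f h2g; case: par => Hf Hg; apply: hle_trans (mt_comm _ _) _; apply/himp_adj;
    apply: hjoin_lub; apply/himp_adj; apply: hle_trans (mt_comm _ _) _.
  + exact: hle_trans Hf (hjoin_l _ _).
  + exact: hle_trans Hg (hjoin_r _ _).
  + exact: hle_trans Hf (hjoin_l _ _).
  + exact: hle_trans Hg (hjoin_r _ _).
- have h2f : forall a, hle (hmeet c (e' a)) (e a) \/ all_odd (fun b => b = a) (~~ par) f.
    by move=> a; case: (h2 a) => [?|[? ?]]; [left|right].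
  have h2g : forall a, hle (hmeet c (e' a)) (e a) \/ all_odd (fun b => b = a) par g.
    by move=> a; case: (h2 a) => [?|[? ?]]; [left|right].
  move: (IHf (~~ par) c e e' h1 h2f) (IHg par c e e' h1 h2g).
  clear h2 h2f h2g; case: par => /= Hf Hg; apply/himp_adj.
  + (* m := (c /\ (ef -> eg)) /\ e'f ; m <= c /\ eg *)
    apply: hle_trans Hg; apply: hmeet_glb.
    * exact: hle_trans (hmeet_l _ _) (hmeet_l _ _).
    * apply: hle_trans (mp (feval e f) _); apply: hmeet_glb.
      - exact: hle_trans (hmeet_l _ _) (hmeet_r _ _).
      - apply: hle_trans Hf; apply: hmeet_glb.
        + exact: hle_trans (hmeet_l _ _) (hmeet_l _ _).
        + exact: hmeet_r.
  + apply: hle_trans Hg; apply: hmeet_glb.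
    * exact: hle_trans (hmeet_l _ _) (hmeet_l _ _).
    * apply: hle_trans (mp (feval e' f) _); apply: hmeet_glb.
      - exact: hle_trans (hmeet_l _ _) (hmeet_r _ _).
      - apply: hle_trans Hf; apply: hmeet_glb.
        + exact: hle_trans (hmeet_l _ _) (hmeet_l _ _).
        + exact: hmeet_r.
Qed.
Section Core.
Variables (H : heyting) (n : nat) (f : ('I_n -> H) -> H) (g : 'I_n -> H -> H).
Hypothesis Hf : forall c y y', (forall l, hle (hmeet c (y l)) (y' l)) ->
  hle (hmeet c (f y')) (f y).
Hypothesis Hg : forall i c x x', hle (hmeet c x) x' -> hle (hmeet c (g i x')) (g i x).

Let G y : 'I_n -> H := fun i => g i (f y).
Let Y k := iter k G (fun _ => htop H).
Let X k := f (Y k).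

Lemma G_mono y y' : (forall l, hle (y l) (y' l)) -> forall i, hle (G y i) (G y' i).
Proof.
move=> hy i; apply: hle_trans (top_mt _) _; apply: Hg.
apply: hle_trans (hmeet_r _ _) _.
apply: hle_trans (top_mt _) _; apply: Hf => l.
exact: hle_trans (hmeet_r _ _) (hy l).
Qed.

Lemma Y_dec k l : hle (Y k.+1 l) (Y k l).
Proof.
elim: k l => [|k IH] l; first exact: htop_greatest.
exact: G_mono.
Qed.

Lemma Q k : forall (S : {set 'I_n}) c, n <= k + #|S| ->
  (forall l, l \in S -> hle c (Y k.+1 l)) -> hle (hmeet c (X k.+1)) (X k).
Proof.
elim: k => [|k IH] S c hS hc.
- have ST : S = setT.
    apply/eqP; rewrite eqEcard subsetT cardsT card_ord; exact: hS.
  apply: Hf => l; apply: hle_trans (hmeet_l _ _) _; apply: hc; by rewrite ST inE.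
- apply: Hf => l.
  case: (boolP (l \in S)) => hl.
  + exact: hle_trans (hmeet_l _ _) (hc l hl).
  + have h1 : hle (hmeet (hmeet c (Y k.+1 l)) (X k.+1)) (X k).
      apply: (IH (l |: S)).
      * by rewrite cardsU1 hl add1n addnS -addSn.
      * move=> m; rewrite !inE => /orP [/eqP ->|hm]; first exact: hmeet_r.
        apply: hle_trans (hmeet_l _ _) _; apply: hle_trans (hc m hm) _.
        exact: Y_dec.
    have h2 := Hg l h1.
    apply: hle_trans h2; apply: hmeet_glb; first exact: hle_refl.
    exact: hmeet_r.
Qed.

Lemma core : exists nu, (forall i, G nu i = nu i) /\
   (forall z, (forall i, G z i = z i) -> forall i, hle (z i) (nu i)).
Proof.
exists (Y n.+1); split.
- move=> i; apply: hle_antisym; first exact: (Y_dec n.+1 i).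
  have h1 : hle (hmeet (Y n.+1 i) (X n.+1)) (X n).
    apply: (Q (S := [set i])); first by rewrite cards1 addn1.
    by move=> m; rewrite inE => /eqP ->; exact: hle_refl.
  apply: hle_trans (mt_self _) _; exact: (@Hg i _ _ _ h1).
- move=> z hz i; elim: n.+1 i => [|k IH] i; first exact: htop_greatest.
  rewrite -hz; exact: G_mono.
Qed.
End Core.

(* Atoms: psi0 is over 'I_n + P (inl i = y_i, inr p = parameter p);
   each psi_i is over option P (None = x, Some p = parameter p).
   phi(x) = psi0(psi_1(x), ..., psi_n(x)) is over option P. *)
Theorem mainTheorem16 (n : nat) (P : Type)
  (psi0 : form ('I_n + P)) (psi : 'I_n -> form (option P))
  (hy : forall i : 'I_n, negative_in (fun a => a = inl i) psi0)
  (hx : forall i : 'I_n, negative_in (fun a => a = None) (psi i))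
  (H : heyting) (v : P -> H) :
  let phi : form (option P) :=
    fsubst (fun a => match a with inl i => psi i | inr p => FVar (Some p) end) psi0 in
  let envx (h : H) : option P -> H :=
    fun a => match a with None => h | Some p => v p end in
  let envy (y : 'I_n -> H) : 'I_n + P -> H :=
    fun a => match a with inl i => y i | inr p => v p end in
  let Psi0 (y : 'I_n -> H) : H := feval (envy y) psi0 in
  let G (y : 'I_n -> H) : 'I_n -> H := fun i => feval (envx (Psi0 y)) (psi i) in
  let F (h : H) : H := feval (envx h) phi in
  exists nu : 'I_n -> H, is_gfp_vec G nu /\ is_lfp F (Psi0 nu).
Proof.
move=> phi envx envy Psi0 G F.
have Hf : forall c y y', (forall l, hle (hmeet c (y l)) (y' l)) ->
    hle (hmeet c (Psi0 y')) (Psi0 y).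
  move=> c y y' h.
  refine (@IM H _ psi0 false c (envy y) (envy y') _ _).
  - by case=> [l|p] /=; [exact: h | exact: hmeet_r].
  - by case=> [l|p]; [right; exact: hy l | left; exact: hmeet_r].
have Hg : forall i c x x', hle (hmeet c x) x' ->
    hle (hmeet c (feval (envx x') (psi i))) (feval (envx x) (psi i)).
  move=> i c x x' h.
  refine (@IM H _ (psi i) false c (envx x) (envx x') _ _).
  - by case=> [p|] /=; [exact: hmeet_r | exact: h].
  - by case=> [p|]; [left; exact: hmeet_r | right; exact: hx i].
have [nu [h1 h2]] := core Hf Hg.
have FE : forall h, F h = Psi0 (fun i => feval (envx h) (psi i)).
  move=> h; rewrite /F /phi feval_subst; apply: feval_ext => -[l|p] //.
exists nu; split; first by split.
split.
- rewrite FE; congr (Psi0 _); apply: functional_extensionality => i; exact: h1.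
- move=> z hz.
  pose w := fun i => feval (envx z) (psi i).
  have hw : forall i, G w i = w i.
    by move=> i; rewrite /G /w -FE hz.
  have hwn := h2 w hw.
  have -> : z = Psi0 w by rewrite -FE hz.
  apply: hle_trans (top_mt _) _; apply: Hf => l.
  exact: hle_trans (hmeet_r _ _) (hwn l).
Qed.
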